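(* For each $n$, let $\delta_1,\ldots,\delta_n>0$ be expected degrees with $\delta_i\delta_j\le \sum_{k=1}^n\delta_k$ for all $i,j$, and let $A$ be the adjacency matrix of a random undirected graph on $\{1,\ldots,n\}$ drawn from the Chung-Lu model: $A$ is symmetric, $A(i,i)=0$, and the entries $\{A(i,j):1\le i<j\le n\}$ are independent with $A(i,j)\sim\mathrm{Bernoulli}(P(i,j))$, where $P(i,j)=\frac{\delta_i\delta_j}{\sum_{k=1}^n\delta_k}$. Let $d_i=\sum_{j=1}^n A(i,j)$ be the degree of node $i$, and set $m_1=\sum_{i=1}^n d_i$, $m_2=\sum_{i=1}^n d_i^2$, $\mu_1=\sum_{i=1}^n\delta_i$, $\mu_2=\sum_{i=1}^n\delta_i^2$. Suppose that, as $n\to\infty$, $\frac{1}{n}\sum_{i=1}^n\delta_i\to\infty$ and $\frac{\sum_i\delta_i^2}{\sum_i\delta_i}=\omega(\log^2 n)$. Then for every $\epsilon>0$, $$P\left[\left|\frac{m_1}{\mu_1}-1\right|>\epsilon\right]\to 0\quad\text{and}\quad P\left[\left|\frac{m_2}{\mu_2}-1\right|>\epsilon\right]\to 0\qquad (n\to\infty).$$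
   Context: The expected degrees $\delta_i=\delta_i^{(n)}$ may depend on $n$; all limits are as $n\to\infty$. $f(n)=\omega(g(n))$ means $f(n)/g(n)\to\infty$. *)

(* Defs.v *)
From HB Require Import structures.
From mathcomp Require Import all_boot all_order all_algebra.
From mathcomp Require Import all_classical all_reals all_analysis.
Set Implicit Arguments. Unset Strict Implicit. Unset Printing Implicit Defensive.
Import Order.TTheory GRing.Theory Num.Theory.
Local Open Scope ring_scope.

Section ChungLu.
Variable R : realType.
Variable n : nat.
Variable delta : 'I_n -> R.

Definition mu1 : R := \sum_(k < n) delta k.
Definition mu2 : R := \sum_(k < n) delta k ^+ 2.

Definition PCL (i j : 'I_n) : R := delta i * delta j / mu1.

(* A sample: one boolean per ordered pair; only pairs with i < j are used
   (the others are forced to be false by the weight below). *)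
Definition config := {ffun 'I_n * 'I_n -> bool}.

Definition adj (w : config) (i j : 'I_n) : R :=
  if (i < j)%N then (w (i, j))%:R
  else if (j < i)%N then (w (j, i))%:R else 0.

Definition weight (w : config) : R :=
  \prod_(p : 'I_n * 'I_n)
     (if (p.1 < p.2)%N then (if w p then PCL p.1 p.2 else 1 - PCL p.1 p.2)
      else (if w p then 0 else 1)).

Definition Pr (E : pred config) : R := \sum_(w : config | E w) weight w.

Definition deg (w : config) (i : 'I_n) : R := \sum_(j < n) adj w i j.
Definition m1 (w : config) : R := \sum_(i < n) deg w i.
Definition m2 (w : config) : R := \sum_(i < n) deg w i ^+ 2.

End ChungLu.

(* Main.v *)
Require Import Defs.
From HB Require Import structures.
From mathcomp Require Import all_boot all_order all_algebra.
From mathcomp Require Import all_classical all_reals all_analysis.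
From mathcomp Require Import ring lra.
Import Order.TTheory GRing.Theory Num.Theory numFieldNormedType.Exports.
Local Open Scope ring_scope.

Section Core.
Variable R : realType.
Variable n : nat.
Variable delta : 'I_n -> R.
Hypothesis hpos : forall i, 0 < delta i.
Hypothesis hbound : forall i j, delta i * delta j <= mu1 delta.

Local Notation P := (PCL delta).
Local Notation pe e := (PCL delta e.1 e.2).
Definition upper (e : 'I_n * 'I_n) := (e.1 < e.2)%N.

Definition fp (e : 'I_n * 'I_n) (b : bool) : R :=
  if upper e then (if b then pe e else 1 - pe e) else (if b then 0 else 1).

Lemma weightE w : weight delta w = \prod_e fp e (w e).
Proof. by []. Qed.

Definition Ex (X : config n -> R) : R := \sum_w weight delta w * X w.

Lemma mu1_ge0 : 0 <= mu1 delta.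
Proof. by rewrite /mu1 sumr_ge0 // => i _; apply/ltW. Qed.

Lemma P_ge0 i j : 0 <= P i j.
Proof. by rewrite /PCL divr_ge0 ?mu1_ge0 // mulr_ge0 // ltW. Qed.

Lemma P_le1 i j : P i j <= 1.
Proof.
rewrite /PCL; have [->|m0] := eqVneq (mu1 delta) 0; first by rewrite invr0 mulr0.
have mp : 0 < mu1 delta by rewrite lt0r m0 mu1_ge0.
by rewrite ler_pdivrMr // mul1r.
Qed.

Lemma fp_ge0 e b : 0 <= fp e b.
Proof.
rewrite /fp; case: ifP => _; case: b => //; rewrite ?P_ge0 ?subr_ge0 ?P_le1 //.
Qed.

Lemma weight_ge0 w : 0 <= weight delta w.
Proof. by rewrite weightE prodr_ge0 // => e _; apply: fp_ge0. Qed.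

Lemma Ex_prod (h : 'I_n * 'I_n -> bool -> R) :
  Ex (fun w => \prod_e h e (w e)) =
  \prod_e (fp e true * h e true + fp e false * h e false).
Proof.
rewrite /Ex.
rewrite (eq_bigr (fun w : config n => \prod_e (fp e (w e) * h e (w e)))); last first.
  by move=> w _; rewrite weightE -big_split.
have E := bigA_distr_bigA (fun (e : 'I_n * 'I_n) (b : bool) => fp e b * h e b).
rewrite [in RHS](eq_bigr (fun e => \sum_(b : bool) fp e b * h e b)); last first.
  by move=> e _; rewrite big_bool.
rewrite E; by [].
Qed.

Lemma fp_sum e : fp e true * 1 + fp e false * 1 = 1.
Proof. by rewrite !mulr1 /fp; case: ifP => _; [rewrite addrC subrK | rewrite add0r]. Qed.

Lemma Ex1 : Ex (fun _ => 1) = 1.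
Proof.
have H := Ex_prod (fun _ _ => 1).
have -> : (fun _ : config n => 1 : R) = (fun w => \prod_e (fun _ _ => 1 : R) e (w e)).
  by apply: funext => w; rewrite big1.
by rewrite H; apply: big1 => e _; exact: fp_sum.
Qed.

Lemma ExD X Y : Ex (fun w => X w + Y w) = Ex X + Ex Y.
Proof. by rewrite /Ex -big_split; apply: eq_bigr => w _; rewrite mulrDr. Qed.

Lemma ExZ c X : Ex (fun w => c * X w) = c * Ex X.
Proof. by rewrite /Ex mulr_sumr; apply: eq_bigr => w _; rewrite mulrCA. Qed.

Lemma ExC c : Ex (fun _ => c) = c.
Proof. by rewrite -[RHS]mulr1 -Ex1 -ExZ; congr Ex; apply: funext => w; rewrite mulr1. Qed.

Lemma ExS (I : finType) (X : I -> config n -> R) :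
  Ex (fun w => \sum_i X i w) = \sum_i Ex (X i).
Proof.
rewrite /Ex exchange_big /=; apply: eq_bigr => w _; by rewrite mulr_sumr.
Qed.

Lemma ExN X : Ex (fun w => - X w) = - Ex X.
Proof. by rewrite -mulN1r -ExZ; congr Ex; apply: funext => w; rewrite mulN1r. Qed.

Lemma Ex_le X Y : (forall w, X w <= Y w) -> Ex X <= Ex Y.
Proof. by move=> h; rewrite /Ex ler_sum // => w _; rewrite ler_wpM2l ?weight_ge0. Qed.


Definition xv (w : config n) (e : 'I_n * 'I_n) : R := ((w e : bool) : nat)%:R.

Lemma fp_x e : upper e -> fp e true * 1 + fp e false * 0 = pe e.
Proof. by move=> ue; rewrite mulr1 mulr0 addr0 /fp ue. Qed.

Lemma Ex_x e : upper e -> Ex (fun w => xv w e) = pe e.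
Proof.
move=> ue.
have -> : (fun w => xv w e) =
  (fun w => \prod_f (if f == e then ((w f : bool) : nat)%:R else 1)).
  apply: funext => w; rewrite (bigD1 e) //= eqxx big1 ?mulr1 // => f /negbTE -> //.
rewrite (Ex_prod (fun f b => if f == e then (b : nat)%:R else 1)) (bigD1 e) //= !eqxx /= fp_x // big1 ?mulr1 // => f /negbTE ->.
exact: fp_sum.
Qed.

Lemma Ex_xx e f : upper e -> upper f -> e != f ->
  Ex (fun w => xv w e * xv w f) = pe e * pe f.
Proof.
move=> ue uf ef.
have -> : (fun w => xv w e * xv w f) =
  (fun w => \prod_g (if g == e then ((w g : bool) : nat)%:R
                     else if g == f then ((w g : bool) : nat)%:R else 1)).
  apply: funext => w; rewrite (bigD1 e) //= eqxx (bigD1 f) /=; last by rewrite eq_sym.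
  rewrite eq_sym (negbTE ef) eqxx big1 ?mulr1 // => g /andP[/negbTE -> /negbTE ->] //.
rewrite (Ex_prod (fun g b => if g == e then (b : nat)%:R else if g == f then (b : nat)%:R else 1)).
rewrite (bigD1 e) //= !eqxx /= fp_x // (bigD1 f) /=; last by rewrite eq_sym.
rewrite eq_sym (negbTE ef) !eqxx /= fp_x // big1 ?mulr1 //.
by move=> g /andP[/negbTE -> /negbTE ->]; exact: fp_sum.
Qed.

Definition Zv (w : config n) (e : 'I_n * 'I_n) : R := xv w e - pe e.

Lemma xv_sq w e : xv w e * xv w e = xv w e.
Proof. by rewrite /xv; case: (w e); rewrite ?mulr1 ?mulr0. Qed.

Lemma Ex_ZZ e f : upper e -> upper f ->
  Ex (fun w => Zv w e * Zv w f) = if e == f then pe e * (1 - pe e) else 0.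
Proof.
move=> ue uf.
have -> : (fun w => Zv w e * Zv w f) = (fun w => xv w e * xv w f
   + (- pe f * xv w e + (- pe e * xv w f + pe e * pe f))).
  by apply: funext => w; rewrite /Zv; ring.
rewrite !ExD !ExZ ExC !Ex_x //.
case: eqVneq => [<-|ef].
  have -> : (fun w => xv w e * xv w e) = (fun w => xv w e) by apply: funext => w; rewrite xv_sq.
  by rewrite Ex_x // /PCL; ring.
by rewrite Ex_xx // /PCL; ring.
Qed.


Lemma ExSP (I : finType) (Q : pred I) (X : I -> config n -> R) :
  Ex (fun w => \sum_(i | Q i) X i w) = \sum_(i | Q i) Ex (X i).
Proof.
rewrite /Ex exchange_big /=; apply: eq_bigr => w _; by rewrite mulr_sumr.
Qed.

Lemma Ex_quad (c : 'I_n * 'I_n -> R) :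
  Ex (fun w => (\sum_(e | upper e) c e * Zv w e) ^+ 2) =
  \sum_(e | upper e) c e ^+ 2 * (pe e * (1 - pe e)).
Proof.
have -> : (fun w => (\sum_(e | upper e) c e * Zv w e) ^+ 2) =
  (fun w => \sum_(e | upper e) \sum_(f | upper f) (c e * c f) * (Zv w e * Zv w f)).
  apply: funext => w; rewrite expr2 mulr_suml; apply: eq_bigr => e _.
  rewrite mulr_sumr; apply: eq_bigr => f _; ring.
rewrite ExSP; apply: eq_bigr => e ue.
rewrite ExSP (bigD1 e) //= ExZ Ex_ZZ // eqxx big1 ?addr0; first by rewrite expr2.
move=> f /andP[uf ne]; rewrite ExZ Ex_ZZ //.
by rewrite eq_sym (negbTE ne) mulr0.
Qed.

Lemma Ex_quad_le (c : 'I_n * 'I_n -> R) :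
  Ex (fun w => (\sum_(e | upper e) c e * Zv w e) ^+ 2) <=
  \sum_(e | upper e) c e ^+ 2 * pe e.
Proof.
rewrite Ex_quad ler_sum // => e _; rewrite ler_wpM2l ?sqr_ge0 //.
by rewrite -[leRHS]mulr1 ler_wpM2l ?P_ge0 // lerBlDr lerDl P_ge0.
Qed.

Lemma Pr_ge0 (Q : pred (config n)) : 0 <= Pr delta Q.
Proof. by rewrite /Pr sumr_ge0 // => w _; apply: weight_ge0. Qed.

Lemma Pr_le (Q1 Q2 : pred (config n)) : (forall w, Q1 w -> Q2 w) ->
  Pr delta Q1 <= Pr delta Q2.
Proof.
move=> h; rewrite /Pr [leLHS]big_mkcond [leRHS]big_mkcond ler_sum // => w _.
case: ifP => q1; first by rewrite h.
by case: ifP => _; rewrite ?weight_ge0.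
Qed.

Lemma markov (X : config n -> R) (a : R) : 0 < a -> (forall w, 0 <= X w) ->
  Pr delta (fun w => a < X w) <= Ex X / a.
Proof.
move=> a0 X0; rewrite /Pr ler_pdivlMr // mulr_suml.
apply: (@le_trans _ _ (\sum_(w | a < X w) weight delta w * X w)).
  by apply: ler_sum => w /ltW h; rewrite ler_wpM2l ?weight_ge0.
rewrite /Ex [leRHS](bigID (fun w => a < X w)) /= lerDl sumr_ge0 // => w _.
by rewrite mulr_ge0 ?weight_ge0.
Qed.


Definition inc (i : 'I_n) (e : 'I_n * 'I_n) : R := (((e.1 == i) || (e.2 == i)) : nat)%:R.

Lemma sum_inc (F : 'I_n * 'I_n -> R) i :
  \sum_(e | upper e) inc i e * F e =
  \sum_(j : 'I_n) (if (i < j)%N then F (i, j) else if (j < i)%N then F (j, i) else 0).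
Proof.
rewrite big_mkcond /=.
rewrite (eq_bigr (fun p => (fun a b => if upper (a, b) then inc i (a, b) * F (a, b) else 0) p.1 p.2)); last by move=> [a b].
rewrite -(pair_bigA _ (fun a b => if upper (a, b) then inc i (a, b) * F (a, b) else 0)) /=.
have H : forall a b, (if upper (a, b) then inc i (a, b) * F (a, b) else 0) =
   (if a == i then (if (i < b)%N then F (i, b) else 0) else 0) +
   (if b == i then (if (a < i)%N then F (a, i) else 0) else 0).
  move=> a b; rewrite /upper /inc /=.
  case: (eqVneq a i) => [->|ai]; case: (eqVneq b i) => [->|bi] /=;
    rewrite ?ltnn ?mul1r ?mul0r ?addr0 ?add0r //.
  by case: (a < b)%N.
rewrite (eq_bigr (fun a => \sum_(b : 'I_n) (if a == i then (if (i < b)%N then F (i, b) else 0) else 0) +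
   \sum_(b : 'I_n) (if b == i then (if (a < i)%N then F (a, i) else 0) else 0))); last first.
  by move=> a _; rewrite -big_split; apply: eq_bigr => b _; exact: H.
rewrite big_split /=.
have E1 : \sum_(a : 'I_n) \sum_(b : 'I_n) (if a == i then (if (i < b)%N then F (i, b) else 0) else 0)
   = \sum_(b : 'I_n) (if (i < b)%N then F (i, b) else 0).
  rewrite exchange_big; apply: eq_bigr => b _.
  by rewrite -big_mkcond big_pred1_eq.
have E2 : \sum_(a : 'I_n) \sum_(b : 'I_n) (if b == i then (if (a < i)%N then F (a, i) else 0) else 0)
   = \sum_(a : 'I_n) (if (a < i)%N then F (a, i) else 0).
  apply: eq_bigr => a _.
  by rewrite -big_mkcond big_pred1_eq.
rewrite E1 E2 -big_split /=; apply: eq_bigr => j _.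
by case: (ltngtP i j); rewrite ?addr0 ?add0r.
Qed.

Lemma deg_inc w i : @deg R n w i = \sum_(e | upper e) inc i e * xv w e.
Proof. by rewrite sum_inc. Qed.

Lemma sum_inc_i e : upper e -> \sum_i inc i e = 2.
Proof.
move=> ue; have ue' : (e.1 < e.2)%N := ue.
have ne : e.2 != e.1 by rewrite neq_ltn ue' orbT.
rewrite (bigD1 e.1) //= (bigD1 e.2) //= /inc !eqxx /= orbT big1 ?addr0.
  by [].
by move=> i /andP[a b]; rewrite eq_sym (negbTE a) eq_sym (negbTE b).
Qed.

Lemma dbl (F : 'I_n * 'I_n -> R) :
  \sum_i \sum_(e | upper e) inc i e * F e = 2 * \sum_(e | upper e) F e.
Proof.
rewrite exchange_big /= mulr_sumr; apply: eq_bigr => e ue.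
by rewrite -mulr_suml sum_inc_i.
Qed.

Lemma m1_x w : @m1 R n w = 2 * \sum_(e | upper e) xv w e.
Proof. by rewrite /m1 -dbl; apply: eq_bigr => i _; rewrite deg_inc. Qed.

Definition av i := \sum_(e | upper e) inc i e * pe e.

Lemma av_E i : mu1 delta != 0 -> av i = delta i - delta i ^+ 2 / mu1 delta.
Proof.
move=> m0; rewrite /av sum_inc.
have Ei : \sum_j P i j = delta i.
  by rewrite /PCL -mulr_suml -mulr_sumr -/(mu1 delta) mulfK.
have Eii : delta i ^+ 2 / mu1 delta = P i i by rewrite /PCL expr2.
rewrite Eii -Ei (bigD1 i) //= [in RHS](bigD1 i) //= ltnn.
rewrite add0r addrAC subrr add0r; apply: eq_bigr => j ji.
case: (ltngtP i j) => h //; first by rewrite /PCL (mulrC (delta j)).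
by move: ji; rewrite (val_inj h) eqxx.
Qed.

Lemma deg_av w i : @deg R n w i = av i + \sum_(e | upper e) inc i e * Zv w e.
Proof.
rewrite deg_inc /av -big_split /=; apply: eq_bigr => e _; rewrite /Zv; ring.
Qed.


Lemma mu2_ge0 : 0 <= mu2 delta.
Proof. by rewrite /mu2 sumr_ge0 // => i _; rewrite sqr_ge0. Qed.

Lemma sum_av : mu1 delta != 0 -> \sum_i av i = mu1 delta - mu2 delta / mu1 delta.
Proof.
move=> m0; rewrite (eq_bigr _ (fun i _ => av_E i m0)) sumrB /mu2 mulr_suml //.
Qed.

Lemma sum_up_p : mu1 delta != 0 ->
  2 * \sum_(e | upper e) pe e = mu1 delta - mu2 delta / mu1 delta.
Proof. by move=> m0; rewrite -sum_av // -dbl. Qed.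

Lemma key_abs (eps t q : R) : 0 < eps -> 0 <= q -> q <= eps / 2 -> eps < `|t - q| ->
  (eps / 2) ^+ 2 < t ^+ 2.
Proof.
move=> e0 q0 qe; rewrite ltr_normr => /orP[] h; nra.
Qed.


Lemma m1_bound eps : 0 < eps -> 1 <= mu1 delta -> mu2 delta / (mu1 delta) ^+ 2 <= eps / 2 ->
  Pr delta (fun w => eps < `|@m1 R n w / mu1 delta - 1|) <= 8 / (eps ^+ 2 * mu1 delta).
Proof.
move=> e0 m1g hq.
set M := mu1 delta.
have M0 : 0 < M by apply: lt_le_trans m1g.
have Mn0 : M != 0 by rewrite gt_eqF.
pose S := fun w => \sum_(e | upper e) 1 * Zv w e.
have hp := sum_up_p Mn0; rewrite -/M in hp.
have hS : forall w, @m1 R n w / M - 1 = 2 * S w / M - mu2 delta / M ^+ 2.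
  move=> w; rewrite m1_x.
  have -> : \sum_(e | upper e) xv w e = S w + \sum_(e | upper e) pe e.
    by rewrite /S -big_split; apply: eq_bigr => e _; rewrite /Zv /= mul1r subrK.
  by rewrite mulrDr hp; field.
pose a := (eps / 2) ^+ 2 * M ^+ 2 / 4.
have a0 : 0 < a by rewrite /a !mulr_gt0 ?exprn_gt0 ?divr_gt0 ?invr_gt0.
have q0 : 0 <= mu2 delta / M ^+ 2 by rewrite divr_ge0 ?mu2_ge0 ?sqr_ge0.
apply: (le_trans (Pr_le _ (fun w => a < S w ^+ 2) _)).
  move=> w /=; rewrite hS => h.
  have h2 := key_abs _ _ _ e0 q0 hq h.
  have E : (2 * S w / M) ^+ 2 = (4 * S w ^+ 2) / M ^+ 2 by field.
  rewrite E ltr_pdivlMr ?exprn_gt0 // in h2.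
  rewrite /a; lra.
apply: (le_trans (markov (fun w => S w ^+ 2) a a0 (fun w => sqr_ge0 (S w)))).
apply: (@le_trans _ _ ((M / 2) / a)).
  apply: ler_wpM2r; first by rewrite invr_ge0 ltW.
  apply: (le_trans (Ex_quad_le (fun _ => 1))).
  have -> : \sum_(e | upper e) 1 ^+ 2 * pe e = (M - mu2 delta / M) / 2.
    rewrite -hp; under eq_bigr do rewrite expr1n mul1r.
    by field.
  apply: ler_wpM2r; first by rewrite invr_ge0 ler0n.
  by rewrite lerBlDr lerDl divr_ge0 ?mu2_ge0 ?ltW.
rewrite /a le_eqVlt; apply/orP; left; apply/eqP; field.
by rewrite Mn0 gt_eqF.
Qed.


Lemma ineq_aY (a y t : R) : 0 < t ->
  `|2 * a * y + y ^+ 2| <= t * a ^+ 2 + y ^+ 2 / t + y ^+ 2.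
Proof.
move=> t0; have tn0 : t != 0 by rewrite gt_eqF.
have E1 : t * a ^+ 2 + y ^+ 2 / t + y ^+ 2 - (2 * a * y + y ^+ 2) = (t * a - y) ^+ 2 / t.
  by field.
have E2 : t * a ^+ 2 + y ^+ 2 / t + y ^+ 2 + (2 * a * y + y ^+ 2) = (t * a + y) ^+ 2 / t + 2 * y ^+ 2.
  by field.
have h1 : 0 <= (t * a - y) ^+ 2 / t by rewrite divr_ge0 ?sqr_ge0 ?ltW.
have h2 : 0 <= (t * a + y) ^+ 2 / t + 2 * y ^+ 2.
  have h3 : 0 <= (t * a + y) ^+ 2 / t by rewrite divr_ge0 ?sqr_ge0 ?ltW.
  have h4 := sqr_ge0 y.
  lra.
rewrite ler_norml; apply/andP; split.
  by rewrite -subr_ge0 opprK addrC E2.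
by rewrite -subr_ge0 E1.
Qed.

Lemma ineq_sq (d r t : R) : 0 <= d -> 0 <= r -> r <= t -> t <= 1 ->
  (1 - 2 * t) * d ^+ 2 <= (d * (1 - r)) ^+ 2 /\ (d * (1 - r)) ^+ 2 <= d ^+ 2.
Proof.
move=> d0 r0 rt t1; split.
  have -> : (d * (1 - r)) ^+ 2 = d ^+ 2 * (1 - 2 * r + r ^+ 2) by ring.
  rewrite mulrC ler_wpM2l ?sqr_ge0 //.
  have : 0 <= r ^+ 2 by rewrite sqr_ge0.
  lra.
rewrite exprMn -[leRHS]mulr1 ler_wpM2l ?sqr_ge0 //.
have h : 0 <= 1 - r by lra.
have h' : 1 - r <= 1 by lra.
by rewrite expr_le1.
Qed.


Definition Yv (i : 'I_n) (w : config n) : R := \sum_(e | upper e) inc i e * Zv w e.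
Definition Tv (w : config n) : R := \sum_i Yv i w ^+ 2.
Definition A2 : R := \sum_i av i ^+ 2.

Lemma inc_sq i e : inc i e ^+ 2 = inc i e.
Proof. by rewrite /inc; case: (_ || _); rewrite ?expr1n ?expr0n. Qed.

Lemma ET_le : mu1 delta != 0 -> Ex Tv <= mu1 delta.
Proof.
move=> m0; rewrite /Tv ExS.
apply: (@le_trans _ _ (\sum_i av i)).
  apply: ler_sum => i _; rewrite /Yv.
  apply: (le_trans (Ex_quad_le (inc i))).
  by rewrite /av; apply: ler_sum => e _; rewrite inc_sq.
by rewrite sum_av // lerBlDr lerDl divr_ge0 ?mu2_ge0 ?mu1_ge0.
Qed.

Lemma m2_pt (t : R) w : 0 < t ->
  `|@m2 R n w - A2| <= t * A2 + (1 + 1 / t) * Tv w.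
Proof.
move=> t0.
have -> : @m2 R n w - A2 = \sum_i (2 * av i * Yv i w + Yv i w ^+ 2).
  rewrite /m2 /A2 -sumrB; apply: eq_bigr => i _; rewrite deg_av -/(Yv i w); ring.
apply: (le_trans (ler_norm_sum _ _ _)).
apply: (@le_trans _ _ (\sum_i (t * av i ^+ 2 + Yv i w ^+ 2 / t + Yv i w ^+ 2))).
  by apply: ler_sum => i _; apply: ineq_aY.
have tn0 : t != 0 by rewrite gt_eqF.
rewrite le_eqVlt; apply/orP; left; apply/eqP.
rewrite /A2 /Tv !mulr_sumr -big_split /=; apply: eq_bigr => i _.
by field.
Qed.

Lemma A2_bounds (t : R) : 1 <= mu1 delta -> (forall i, delta i / mu1 delta <= t) -> t <= 1 ->
  (1 - 2 * t) * mu2 delta <= A2 /\ A2 <= mu2 delta.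
Proof.
move=> m1g hd t1.
have M0 : 0 < mu1 delta by apply: lt_le_trans m1g.
have m0 : mu1 delta != 0 by rewrite gt_eqF.
have hav : forall i, av i = delta i * (1 - delta i / mu1 delta).
  by move=> i; rewrite av_E //; field.
have H : forall i, (1 - 2 * t) * delta i ^+ 2 <= av i ^+ 2 /\ av i ^+ 2 <= delta i ^+ 2.
  move=> i; rewrite hav; apply: ineq_sq => //; first exact: ltW.
  by rewrite divr_ge0 ?ltW.
split.
  by rewrite /mu2 mulr_sumr /A2; apply: ler_sum => i _; case: (H i).
by rewrite /mu2 /A2; apply: ler_sum => i _; case: (H i).
Qed.


Lemma m2_bound eps : 0 < eps -> eps <= 1 -> 1 <= mu1 delta -> 0 < mu2 delta ->
  (forall i, delta i / mu1 delta <= eps / 6) ->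
  Pr delta (fun w => eps < `|@m2 R n w / mu2 delta - 1|) <=
    mu1 delta / ((eps / 2) / (1 + 6 / eps) * mu2 delta).
Proof.
move=> e0 e1 m1g N0 hd.
have M0 : 0 < mu1 delta by apply: lt_le_trans m1g.
have m0 : mu1 delta != 0 by rewrite gt_eqF.
have Nn0 : mu2 delta != 0 by rewrite gt_eqF.
have en0 : eps != 0 by rewrite gt_eqF.
have t0 : 0 < eps / 6 by rewrite divr_gt0.
have t1 : eps / 6 <= 1 by lra.
have [hA1 hA2] := A2_bounds (eps / 6) m1g hd t1.
have k0 : 0 < 1 + 6 / eps by rewrite addr_gt0 ?divr_gt0.
have c0 : 0 < (eps / 2) / (1 + 6 / eps) * mu2 delta.
  by rewrite mulr_gt0 ?divr_gt0.
apply: (le_trans (Pr_le _ (fun w => (eps / 2) / (1 + 6 / eps) * mu2 delta < Tv w) _)).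
  move=> w /= h.
  have hD := m2_pt _ w t0.
  have E : @m2 R n w / mu2 delta - 1 = (@m2 R n w - mu2 delta) * (mu2 delta)^-1 by field.
  have hi : `|(mu2 delta)^-1| = (mu2 delta)^-1 by rewrite gtr0_norm ?invr_gt0.
  rewrite E normrM hi ltr_pdivlMr // in h.
  have h2 : `|@m2 R n w - mu2 delta| <= `|@m2 R n w - A2| + (mu2 delta - A2).
    have := ler_distD A2 (@m2 R n w) (mu2 delta).
    have hn : `|A2 - mu2 delta| = mu2 delta - A2 by rewrite ler0_norm ?opprB // subr_le0.
    by rewrite hn.
  have h3 : eps / 6 * A2 <= eps / 6 * mu2 delta by apply: ler_wpM2l => //; exact: ltW.
  have E1 : (1 + 1 / (eps / 6)) = 1 + 6 / eps by field.
  rewrite E1 in hD.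
  have h4 : eps / 2 * mu2 delta < (1 + 6 / eps) * Tv w.
    move: h hD h2 h3 hA1; set N := mu2 delta; set T := (1 + 6 / eps) * Tv w.
    set m := `|_ - N|; set m' := `|_ - A2|.
    move=> h hD h2 h3 hA1.
    have : (1 - 2 * (eps / 6)) * N = N - 2 * (eps / 6 * N) by ring.
    have : eps * N = 6 * (eps / 6 * N) by field.
    have : eps / 2 * N = 3 * (eps / 6 * N) by field.
    lra.
  have E2 : eps / 2 / (1 + 6 / eps) * mu2 delta = (eps / 2 * mu2 delta) / (1 + 6 / eps).
    by rewrite mulrAC.
  rewrite E2 ltr_pdivrMr // (mulrC (Tv w)).
  exact: h4.
apply: (le_trans (markov Tv _ c0 _)).
  by move=> w; rewrite /Tv sumr_ge0 // => i _; rewrite sqr_ge0.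
by apply: ler_wpM2r; [rewrite invr_ge0 ltW | apply: ET_le].
Qed.

End Core.

Local Open Scope classical_set_scope.

Lemma expR1_le4 (R : realType) : expR (1 : R) <= 4.
Proof.
have h := expR_ge1Dx (- (1 / 2) : R).
rewrite expRN in h.
have p0 : 0 < expR (1 / 2 : R) by apply: expR_gt0.
have h2 : expR (1 / 2 : R) <= 2.
  have : 1 + - (1 / 2) = (2 : R)^-1 by field.
  move=> E; rewrite E lef_pV2 ?posrE // in h; lra.
have -> : (1 : R) = 2%:R * (1 / 2) by field.
rewrite expRM_natl.
rewrite expr2; nra.
Qed.

Lemma ln_ge1 (R : realType) (m : nat) : (4 <= m)%N -> 1 <= ln (m%:R : R).
Proof.
move=> hm.
have h4 : (4 : R) <= m%:R by rewrite (ler_nat R 4 m).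
rewrite -[X in X <= _](@expRK R 1).
rewrite ler_ln ?posrE ?expR_gt0 //; last by apply: (lt_le_trans _ h4).
exact: le_trans (expR1_le4 R) h4.
Qed.

Lemma mu1_infty (R : realType) (delta : forall n : nat, 'I_n -> R)
  (hpos : forall n (i : 'I_n), 0 < delta n i)
  (havg : (fun n : nat => mu1 (delta n) / n%:R) @ \oo --> +oo) :
  (fun n : nat => mu1 (delta n)) @ \oo --> +oo.
Proof.
apply/cvgryPge => A.
have hA := (cvgryPge _).1 havg (Num.max A 0).
near=> m.
have H1 : Num.max A 0 <= mu1 (delta m) / m%:R by near: m; exact: hA.
have H2 : (1 <= m)%N by near: m; exact: nbhs_infty_ge.
have m0 : 0 <= mu1 (delta m) by apply: mu1_ge0.
have : mu1 (delta m) / m%:R <= mu1 (delta m).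
  rewrite ler_pdivrMr ?ltr0n //; by rewrite ler_peMr // ler1n.
move: H1; rewrite ge_max => /andP[h _] h2.
exact: le_trans h h2.
Unshelve. all: by end_near.
Qed.

Lemma ratio_infty (R : realType) (delta : forall n : nat, 'I_n -> R)
  (hpos : forall n (i : 'I_n), 0 < delta n i)
  (hratio : (fun n : nat => (mu2 (delta n) / mu1 (delta n)) / (ln (n%:R : R)) ^+ 2)
              @ \oo --> +oo) :
  (fun n : nat => mu2 (delta n) / mu1 (delta n)) @ \oo --> +oo.
Proof.
apply/cvgryPge => A.
have hA := (cvgryPge _).1 hratio (Num.max A 0).
near=> m.
have H1 : Num.max A 0 <= (mu2 (delta m) / mu1 (delta m)) / (ln (m%:R : R)) ^+ 2.
  by near: m; exact: hA.
have H2 : (4 <= m)%N by near: m; exact: nbhs_infty_ge.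
have r0 : 0 <= mu2 (delta m) / mu1 (delta m) by rewrite divr_ge0 ?mu2_ge0 ?mu1_ge0.
have L1 : 1 <= ln (m%:R : R) ^+ 2 by rewrite expr_ge1 // ?ln_ge1 // (le_trans ler01) // ln_ge1.
have L0 : 0 < ln (m%:R : R) ^+ 2 by apply: lt_le_trans L1.
have : (mu2 (delta m) / mu1 (delta m)) / (ln (m%:R : R)) ^+ 2 <= mu2 (delta m) / mu1 (delta m).
  by rewrite ler_pdivrMr // ler_peMr.
move: H1; rewrite ge_max => /andP[h _] h2.
exact: le_trans h h2.
Unshelve. all: by end_near.
Qed.

Lemma mu2_le (R : realType) (n : nat) (delta : 'I_n -> R)
  (hbound : forall i j : 'I_n, delta i * delta j <= mu1 delta) :
  mu2 delta <= n%:R * mu1 delta.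
Proof.
rewrite /mu2 (@le_trans _ _ (\sum_(k < n) mu1 delta)) //.
  by apply: ler_sum => i _; rewrite expr2.
by rewrite sumr_const card_ord mulr_natl.
Qed.

Theorem theorem2 (R : realType) (delta : forall n : nat, 'I_n -> R)
  (hpos : forall n (i : 'I_n), 0 < delta n i)
  (hbound : forall n (i j : 'I_n), delta n i * delta n j <= mu1 (delta n))
  (havg : (fun n : nat => mu1 (delta n) / n%:R) @ \oo --> +oo)
  (hratio : (fun n : nat => (mu2 (delta n) / mu1 (delta n)) / (ln (n%:R : R)) ^+ 2)
              @ \oo --> +oo) :
  forall eps : R, 0 < eps ->
    ((fun n : nat => Pr (delta n)
        (fun w => eps < `| @m1 R n w / mu1 (delta n) - 1 |)) @ \oo --> (0 : R)) /\
    ((fun n : nat => Pr (delta n)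
        (fun w => eps < `| @m2 R n w / mu2 (delta n) - 1 |)) @ \oo --> (0 : R)).
Proof.
move=> eps e0.
have hM := mu1_infty _ _ hpos havg.
have hQ := ratio_infty _ _ hpos hratio.
split.
  apply/cvgrPdist_le => e e_pos.
  have hA := (cvgryPge _).1 hM (1 + 8 / (eps ^+ 2 * e)).
  have hB := (cvgryPge _).1 havg (2 / eps).
  near=> m.
  have H1 : 1 + 8 / (eps ^+ 2 * e) <= mu1 (delta m) by near: m; exact: hA.
  have H2 : 2 / eps <= mu1 (delta m) / m%:R by near: m; exact: hB.
  have H3 : (1 <= m)%N by near: m; exact: nbhs_infty_ge.
  rewrite sub0r normrN ger0_norm ?Pr_ge0 //.
  have K0 : 0 <= 8 / (eps ^+ 2 * e) by rewrite divr_ge0 ?mulr_ge0 ?ltW ?exprn_gt0.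
  have M1 : 1 <= mu1 (delta m) by lra.
  have M0 : 0 < mu1 (delta m) by apply: lt_le_trans M1.
  have mpos : (0 : R) < m%:R by rewrite ltr0n.
  apply: (le_trans (m1_bound _ _ _ (hpos m) (hbound m) _ e0 M1 _)).
    have h2 := mu2_le _ _ _ (hbound m).
    rewrite ler_pdivlMr // mulrAC ler_pdivrMr // in H2.
    rewrite ler_pdivrMr ?exprn_gt0 //.
    nra.
  rewrite ler_pdivrMr ?mulr_gt0 ?exprn_gt0 //.
  have H1' : 8 / (eps ^+ 2 * e) <= mu1 (delta m) by lra.
  rewrite ler_pdivrMr ?mulr_gt0 ?exprn_gt0 // in H1'.
  nra.
apply/cvgrPdist_le => e e_pos.
pose ep := Num.min eps 1.
have ep0 : 0 < ep by rewrite lt_min e0 ltr01.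
have ep1 : ep <= 1 by rewrite ge_min lexx orbT.
have epe : ep <= eps by rewrite ge_min lexx.
pose c := (ep / 2) / (1 + 6 / ep).
have c0 : 0 < c by rewrite /c divr_gt0 ?addr_gt0 ?divr_gt0.
have hA := (cvgryPge _).1 hM (1 + 36 / ep ^+ 2).
have hB := (cvgryPge _).1 hQ (1 / (c * e) + 1).
near=> m.
have H1 : 1 + 36 / ep ^+ 2 <= mu1 (delta m) by near: m; exact: hA.
have H2 : 1 / (c * e) + 1 <= mu2 (delta m) / mu1 (delta m) by near: m; exact: hB.
rewrite sub0r normrN ger0_norm ?Pr_ge0 //.
have K0 : 0 <= 36 / ep ^+ 2 by rewrite divr_ge0 ?exprn_ge0 ?ltW.
have K1 : 0 <= 1 / (c * e) by rewrite divr_ge0 // mulr_ge0 // ltW.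
have M1 : 1 <= mu1 (delta m) by lra.
have M0 : 0 < mu1 (delta m) by apply: lt_le_trans M1.
have Mn0 : mu1 (delta m) != 0 by rewrite gt_eqF.
have q1 : 1 <= mu2 (delta m) / mu1 (delta m) by lra.
have hq : mu2 (delta m) = (mu2 (delta m) / mu1 (delta m)) * mu1 (delta m) by rewrite mulfVK.
have N0 : 0 < mu2 (delta m) by rewrite hq mulr_gt0 // (lt_le_trans ltr01).
have hd : forall i, delta m i / mu1 (delta m) <= ep / 6.
  move=> i.
  have x0 : 0 <= delta m i / mu1 (delta m) by rewrite divr_ge0 ?ltW.
  have hb := hbound m i i; rewrite -expr2 in hb.
  have hx2 : (delta m i / mu1 (delta m)) ^+ 2 * mu1 (delta m) <= 1.
    have -> : (delta m i / mu1 (delta m)) ^+ 2 * mu1 (delta m) = delta m i ^+ 2 / mu1 (delta m) by field.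
    by rewrite ler_pdivrMr // mul1r.
  have h36 : 36 <= ep ^+ 2 * mu1 (delta m).
    have : 36 / ep ^+ 2 <= mu1 (delta m) by lra.
    by rewrite ler_pdivrMr ?exprn_gt0 // mulrC.
  have h6 : (6 * (delta m i / mu1 (delta m))) ^+ 2 <= ep ^+ 2.
    set x := delta m i / mu1 (delta m) in x0 hx2 *.
    rewrite exprMn.
    apply: (@le_trans _ _ (x ^+ 2 * (ep ^+ 2 * mu1 (delta m)))).
      have -> : (6 : R) ^+ 2 = 36 by rewrite expr2; lra.
      by rewrite mulrC; apply: ler_wpM2l => //; apply: exprn_ge0.
    rewrite mulrCA -[leRHS]mulr1; apply: ler_wpM2l => //; apply: exprn_ge0; exact: ltW.
  nra.
apply: (le_trans (Pr_le _ _ _ (hpos m) (hbound m) _ (fun w => ep < `|@m2 R m w / mu2 (delta m) - 1|) _)).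
  by move=> w /= h; apply: le_lt_trans h.
apply: (le_trans (m2_bound _ _ _ (hpos m) (hbound m) _ ep0 ep1 M1 N0 hd)).
have cN : 0 < c * mu2 (delta m) by rewrite mulr_gt0.
rewrite ler_pdivrMr; last exact: cN.
rewrite -/c.
have H2' : 1 / (c * e) <= mu2 (delta m) / mu1 (delta m) by lra.
have ce : 0 < c * e by rewrite mulr_gt0.
rewrite ler_pdivrMr in H2'; last exact: ce.
rewrite [in leRHS]hq.
set q := mu2 (delta m) / mu1 (delta m) in H2' *.
nra.
Unshelve. all: by end_near.
Qed.
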